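(* For every $p\ge1$ and $C>0$, the map $d_{\mathbb G,A}$ is a pseudometric on $\mathbb G$ (it is well defined on equality classes, $d_{\mathbb G,A}(G,G)=0$, it is symmetric and satisfies the triangle inequality). If $d_{\mathcal X}$ and $d_{\mathcal Y}$ are metrics, then $d_{\mathbb G,A}$ is a metric on $\mathbb G$.
   Context: Let $(\mathcal X,d_{\mathcal X})$ and $(\mathcal Y,d_{\mathcal Y})$ be pseudometric spaces (symmetric, satisfying the triangle inequality, $d(z,z)=0$), with a distinguished element $y_0\in\mathcal Y$ meaning ''no edge''. For $n\in\mathbb N_0$ write $[n]=\{1,\dots,n\}$ ($[0]=\emptyset$) and $S_n$ for the set of permutations of $[n]$. An attributed simple graph is a triple $([n],v,e)$ with $v:[n]\to\mathcal X$ and $e:[n]^2\to\mathcal Y$ symmetric ($e(i,i')=e(i',i)$) with $e(i,i)=y_0$ for all $i$; write $v_i=v(i)$, $e_{ii'}=e(i,i')$. Two graphs $([n],v,e)$, $([n],w,f)$ are regarded as equal if there is $\pi\in S_n$ with $v_i=w_{\pi(i)}$ and $e_{ii'}=f_{\pi(i)\pi(i')}$ for all $i,i'\in[n]$; $\mathbb G$ denotes the set of such graphs. GTT distance: for $p\ge1$, $C>0$ and $([m],v,e),([n],w,f)\in\mathbb G$ with $m\le n$, $$d_{\mathbb G,A}(([m],v,e),([n],w,f))=\min_{I\subset[m],\,\pi\in S_n}\Big[(m+n-2|I|)C^p+\sum_{i\in I}d_{\mathcal X}(v_i,w_{\pi(i)})^p+\tfrac12\sum_{(i,i')\in I^2}d_{\mathcal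 Y}(e_{ii'},f_{\pi(i)\pi(i')})^p+\tfrac12\sum_{(i,i')\in[m]^2\setminus I^2}d_{\mathcal Y}(e_{ii'},y_0)^p+\tfrac12\sum_{(j,j')\in[n]^2\setminus\pi(I)^2}d_{\mathcal Y}(y_0,f_{jj'})^p\Big]^{1/p},$$ and for $m>n$ it is defined by swapping the two arguments. *)

(* Defs.v *)
From HB Require Import structures.
From mathcomp Require Import all_boot all_order all_algebra all_fingroup.
From mathcomp Require Import reals exp.
Set Implicit Arguments. Unset Strict Implicit. Unset Printing Implicit Defensive.
Import Order.TTheory GRing.Theory Num.Theory.
Local Open Scope ring_scope.

Definition pseudometric_on (R : realType) (T : Type) (P : T -> Prop)
  (d : T -> T -> R) : Prop :=
  [/\ forall x, P x -> d x x = 0,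
      forall x y, P x -> P y -> d x y = d y x &
      forall x y z, P x -> P y -> P z -> d x z <= d x y + d y z].

Definition pseudometric (R : realType) (T : Type) (d : T -> T -> R) : Prop :=
  pseudometric_on (fun _ => True) d.

Definition metric (R : realType) (T : Type) (d : T -> T -> R) : Prop :=
  pseudometric d /\ forall x y, d x y = 0 -> x = y.

Record graph (X Y : Type) := Graph {
  gn : nat;
  gv : 'I_gn -> X;
  ge : 'I_gn -> 'I_gn -> Y }.
Arguments gv {X Y} g _.
Arguments ge {X Y} g _ _.

Definition simple_graph (X Y : Type) (y0 : Y) (G : graph X Y) : Prop :=
  (forall i i', ge G i i' = ge G i' i) /\ (forall i, ge G i i = y0).

Definition graph_eq (X Y : Type) (G H : graph X Y) : Prop :=
  exists (h : gn G = gn H) (pi : 'S_(gn H)),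
    forall i i' : 'I_(gn G),
      gv G i = gv H (pi (cast_ord h i)) /\
      ge G i i' = ge H (pi (cast_ord h i)) (pi (cast_ord h i')).

Section GTT.
Variables (R : realType) (X Y : Type) (dX : X -> X -> R) (dY : Y -> Y -> R)
  (y0 : Y) (p C : R).

(* The cost inside the minimum, for G with m vertices, H with n vertices,
   m <= n, I a subset of [m], pi in S_n (pi(i) for i in [m] via widening). *)
Definition gtt_cost (G H : graph X Y) (hmn : (gn G <= gn H)%N)
  (I : {set 'I_(gn G)}) (pi : 'S_(gn H)) : R :=
  let m := gn G in let n := gn H in
  let f := fun i : 'I_m => pi (widen_ord hmn i) in
  let pI := f @: I in
  (m + n - 2 * #|I|)%N%:R * (C `^ p)
  + \sum_(i in I) (dX (gv G i) (gv H (f i))) `^ p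
  + 2^-1 * \sum_(i in I) \sum_(i' in I)
              (dY (ge G i i') (ge H (f i) (f i'))) `^ p
  + 2^-1 * \sum_(i : 'I_m) \sum_(i' : 'I_m | ~~ ((i \in I) && (i' \in I)))
              (dY (ge G i i') y0) `^ p
  + 2^-1 * \sum_(j : 'I_n) \sum_(j' : 'I_n | ~~ ((j \in pI) && (j' \in pI)))
              (dY y0 (ge H j j')) `^ p.

(* Minimum over all (I, pi); the candidate (set0, 1) is used as the seed of
   the iterated min, so this is exactly the minimum over the finite set. *)
Definition gtt_le (G H : graph X Y) (hmn : (gn G <= gn H)%N) : R :=
  let c := gtt_cost hmn in
  (\big[Num.min/c set0 1%g]_(I : {set 'I_(gn G)})
     \big[Num.min/c set0 1%g]_(pi : 'S_(gn H)) c I pi) `^ (p^-1).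

Lemma nleq_geq (m n : nat) : (m <= n)%N = false -> (n <= m)%N.
Proof. by move=> h; apply: ltnW; rewrite ltnNge h. Qed.

(* d_{G,A}: for m <= n as above, otherwise arguments swapped. *)
Definition gtt_dist (G H : graph X Y) : R :=
  (if (gn G <= gn H)%N as b return ((gn G <= gn H)%N = b -> R)
   then fun h => gtt_le h
   else fun h => gtt_le (nleq_geq h)) erefl.

End GTT.

(* Main.v *)
Require Import Defs.
From HB Require Import structures.
From mathcomp Require Import all_boot all_order all_algebra all_fingroup.
From mathcomp Require Import reals exp.
From mathcomp Require Import interval_inference convex hoelder.
From mathcomp Require classical_sets.
From mathcomp Require Import ring zify lra.
From Stdlib Require Import Lia.
Import Order.TTheory GRing.Theory Num.Theory.
Set Implicit Arguments. Unset Strict Implicit. Unset Printing Implicit Defensive.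
Local Open Scope ring_scope.

Lemma conv_pow (R : realType) (p l x y : R) : 1 <= p -> 0 <= l -> l <= 1 -> 0 <= x -> 0 <= y ->
  (l * x + (1 - l) * y) `^ p <= l * x `^ p + (1 - l) * y `^ p.
Proof.
move=> p1 l0 l1 x0 y0.
have := (@convex_powR R p p1 (Itv01 l0 l1) x y).
rewrite !classical_sets.inE /= !in_itv /= x0 y0.
move=> /(_ isT isT).
by rewrite !convRE /=.
Qed.

Section Mink.
Variables (R : realType) (p : R).
Hypothesis p1 : 1 <= p.

Lemma p_gt0 : 0 < p. Proof. exact: lt_le_trans p1. Qed.
Lemma p_neq0 : p != 0. Proof. by rewrite gt_eqF // p_gt0. Qed.

Lemma pw_pinv x : 0 <= x -> (x `^ p^-1) `^ p = x.
Proof. by move=> x0; rewrite -powRrM mulVf ?p_neq0 // powRr1. Qed.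

Lemma pinv_pw x : 0 <= x -> (x `^ p) `^ p^-1 = x.
Proof. by move=> x0; rewrite -powRrM mulfV ?p_neq0 // powRr1. Qed.

Lemma pw_le x y : 0 <= x -> x <= y -> x `^ p <= y `^ p.
Proof.
move=> x0 xy; apply: ge0_ler_powR => //; first exact: ltW p_gt0.
by rewrite nnegrE (le_trans x0).
Qed.

Lemma pw_div x y : 0 <= x -> 0 < y -> (x / y) `^ p = x `^ p / y `^ p.
Proof.
move=> x0 y0; rewrite powRM // ?invr_ge0 ?(ltW y0) //.
by rewrite -(powR_inv1 (ltW y0)) powRAC powR_inv1 // powR_ge0.
Qed.

Lemma sum_pinv0 (J : finType) (w a : J -> R) : (forall j, 0 < w j) -> (forall j, 0 <= a j) ->
  (\sum_j w j * a j `^ p) `^ p^-1 = 0 -> forall j, a j = 0.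
Proof.
move=> w0 a0 /powR_eq0_eq0 S0 j.
have := psumr_eq0P (fun i _ => mulr_ge0 (ltW (w0 i)) (powR_ge0 (a i) p)) S0 (i:=j) isT.
move/eqP; rewrite mulf_eq0 gt_eqF //= => /eqP; exact: powR_eq0_eq0.
Qed.

Lemma minkJ (J : finType) (w a b c : J -> R) : (forall j, 0 < w j) ->
  (forall j, 0 <= a j) -> (forall j, 0 <= b j) -> (forall j, 0 <= c j) ->
  (forall j, c j <= a j + b j) ->
  \sum_j w j * c j `^ p <=
  ((\sum_j w j * a j `^ p) `^ p^-1 + (\sum_j w j * b j `^ p) `^ p^-1) `^ p.
Proof.
move=> w0 a0 b0 c0 cab.
set SA := \sum_j w j * a j `^ p; set SB := \sum_j w j * b j `^ p.
have SA0 : 0 <= SA by apply: sumr_ge0 => j _; apply: mulr_ge0; [exact: ltW | exact: powR_ge0].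
have SB0 : 0 <= SB by apply: sumr_ge0 => j _; apply: mulr_ge0; [exact: ltW | exact: powR_ge0].
set A := SA `^ p^-1; set B := SB `^ p^-1.
have [A0|A0] := eqVneq A 0.
  have az := sum_pinv0 w0 a0 A0.
  rewrite A0 add0r pw_pinv //; apply: ler_sum => j _.
  rewrite ler_wpM2l ?(ltW (w0 j)) //; apply: pw_le => //.
  by have := cab j; rewrite az add0r.
have [B0|B0] := eqVneq B 0.
  have bz := sum_pinv0 w0 b0 B0.
  rewrite B0 addr0 pw_pinv //; apply: ler_sum => j _.
  rewrite ler_wpM2l ?(ltW (w0 j)) //; apply: pw_le => //.
  by have := cab j; rewrite bz addr0.
have Ap : 0 < A by rewrite lt0r A0 powR_ge0.
have Bp : 0 < B by rewrite lt0r B0 powR_ge0.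
have hA : A `^ p = SA by exact: pw_pinv SA0.
have hB : B `^ p = SB by exact: pw_pinv SB0.
have eSA : \sum_j w j * a j `^ p = SA by [].
have eSB : \sum_j w j * b j `^ p = SB by [].
clearbody A B SA SB.
have Sp : 0 < A + B by exact: (addr_gt0 Ap Bp).
have l0 : 0 <= A / (A + B) by exact: (divr_ge0 (ltW Ap) (ltW Sp)).
have l1 : A / (A + B) <= 1.
  rewrite (ler_pdivrMr _ _ Sp) mul1r lerDl; exact: (ltW Bp).
have l1e : 1 - A / (A + B) = B / (A + B).
  by field; exact: (lt0r_neq0 Sp).
have nA := lt0r_neq0 Ap; have nB := lt0r_neq0 Bp; have nS := lt0r_neq0 Sp.
have key j : c j `^ p <= (A + B) `^ p * (A / (A + B) * (a j `^ p / A `^ p) + (1 - A / (A + B)) * (b j `^ p / B `^ p)).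
  have e : a j + b j = (A + B) * (A / (A + B) * (a j / A) + (1 - A / (A + B)) * (b j / B)).
    rewrite l1e; field; by rewrite nA nB nS.
  have q1 : 0 <= A / (A + B) * (a j / A) + (1 - A / (A + B)) * (b j / B).
    have l1' : 0 <= 1 - A / (A + B) by rewrite subr_ge0.
    exact: (addr_ge0 (mulr_ge0 l0 (divr_ge0 (a0 j) (ltW Ap))) (mulr_ge0 l1' (divr_ge0 (b0 j) (ltW Bp)))).
  have h1 := pw_le (c0 j) (cab j).
  apply: (le_trans h1); rewrite e (powRM _ (ltW Sp) q1).
  rewrite (ler_wpM2l (powR_ge0 _ _)) //.
  have := conv_pow p1 l0 l1 (divr_ge0 (a0 j) (ltW Ap)) (divr_ge0 (b0 j) (ltW Bp)).
  by rewrite (pw_div (a0 j) Ap) (pw_div (b0 j) Bp).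
have nAp : A `^ p != 0 by exact: (lt0r_neq0 (powR_gt0 p Ap)).
have nBp : B `^ p != 0 by exact: (lt0r_neq0 (powR_gt0 p Bp)).
apply: (le_trans (ler_sum _ (fun j _ => ler_wpM2l (ltW (w0 j)) (key j)))).
rewrite (_ : \sum_j _ = \sum_j ((A + B) `^ p * (A / (A + B)) / A `^ p * (w j * a j `^ p)
   + (A + B) `^ p * (1 - A / (A + B)) / B `^ p * (w j * b j `^ p))); last first.
  by apply: eq_bigr => j _; field; rewrite nAp nBp nS.
rewrite big_split /= -!mulr_sumr eSA eSB -hA -hB le_eqVlt; apply/orP; left; apply/eqP.
by field; rewrite nAp nBp nS.
Qed.
End Mink.

Section Ext.
Local Open Scope nat_scope.
Lemma inj_card (T : finType) (A B : {set T}) : #|A| <= #|B| ->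
  exists f : T -> T, {in A &, injective f} /\ (forall x, x \in A -> f x \in B).
Proof.
move=> hAB.
have hi : forall x, x \in A -> index x (enum A) < size (enum B).
  move=> x xA; rewrite -cardE (leq_trans _ hAB) // cardE index_mem mem_enum //.
exists (fun x => nth x (enum B) (index x (enum A))); split.
  move=> x y xA yA /= e.
  have := e; rewrite (set_nth_default y x (hi x xA)) => /eqP.
  rewrite nth_uniq ?enum_uniq ?hi // => /eqP ei.
  have xe : x \in enum A by rewrite mem_enum.
  have ye : y \in enum A by rewrite mem_enum.
  by rewrite -(nth_index x xe) ei nth_index.
by move=> x xA /=; rewrite -mem_enum mem_nth // hi.
Qed.

Lemma ext_perm (T : finType) (A : {set T}) (f : T -> T) :
  {in A &, injective f} -> exists s : {perm T}, {in A, s =1 f}.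
Proof.
move=> finj.
have ce : #|~: A| <= #|~: (f @: A)|.
  have e1 := cardsC A; have e2 := cardsC (f @: A).
  rewrite card_in_imset // in e2.
  by rewrite -(leq_add2l #|A|) e1 e2.
have [g [ginj gB]] := inj_card ce.
pose h x := if x \in A then f x else g x.
have hinj : injective h.
  move=> x y; rewrite /h.
  case: (boolP (x \in A)) => xA; case: (boolP (y \in A)) => yA.
  - exact: finj.
  - move=> e; have := gB y; rewrite !inE yA /= => /(_ isT).
    by rewrite -e imset_f.
  - move=> e; have := gB x; rewrite !inE xA /= => /(_ isT).
    by rewrite e imset_f.
  - by apply: ginj; rewrite inE.
exists (perm hinj) => x xA; by rewrite permE /h xA.
Qed.

Lemma card_lt N b : b <= N -> #|[set y : 'I_N | y < b]| = b.
Proof.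
move=> h; rewrite -sum1_card (eq_bigl (fun y : 'I_N => y < b)); last by move=> y; rewrite inE.
rewrite big_ord_narrow; first exact: h.
by rewrite big_const_ord iter_addn_0 mul1n.
Qed.
Lemma card_ge N b : #|[set y : 'I_N | b <= y]| = N - b.
Proof.
have e := cardsC [set y : 'I_N | y < b]; rewrite card_ord in e.
have -> : [set y : 'I_N | b <= y] = ~: [set y : 'I_N | y < b].
  by apply/setP => y; rewrite !inE leqNgt.
case: (leqP b N) => h.
  by rewrite card_lt // in e; lia.
have hT : [set y : 'I_N | y < b] = setT.
  by apply/setP => y; rewrite !inE (ltn_trans (ltn_ord y) h).
rewrite hT cardsT card_ord in e; rewrite hT setCT cards0; lia.
Qed.

Lemma tau_exists N a b c (hN : a + b + c <= N) (s1 s2 : 'S_N) :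
  exists tau : 'S_N, (forall y : 'I_N, y < b -> tau y = y) /\
    (forall k : 'I_N, k < a -> b <= s1 k -> c <= s2 (tau (s1 k))).
Proof.
pose S := [set y : 'I_N | (b <= y) && ((s1^-1)%g y < a)].
pose T := [set y : 'I_N | (b <= y) && ~~ (s2 y < c)].
have cS : #|S| <= a.
  apply: leq_trans (_ : #|[set y : 'I_N | (s1^-1)%g y < a]| <= a).
    by apply: subset_leq_card; apply/subsetP => y; rewrite !inE => /andP[].
  rewrite (_ : [set y | _] = (s1^-1)%g @^-1: [set k : 'I_N | k < a]).
    have ha : a <= N by lia.
    by rewrite card_preimset ?(card_lt ha) //; apply: perm_inj.
  by apply/setP => y; rewrite !inE.
have cT : a <= #|T|.
  rewrite (_ : T = [set y : 'I_N | b <= y] :\: s2 @^-1: [set z : 'I_N | z < c]); last first.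
    by apply/setP => y; rewrite !inE andbC.
  rewrite cardsD card_ge.
  have : #|[set y : 'I_N | b <= y] :&: s2 @^-1: [set z : 'I_N | z < c]| <= c.
    apply: leq_trans (subset_leq_card (subsetIr _ _)) _.
    have hc : c <= N by lia.
    by rewrite card_preimset ?(card_lt hc) //; apply: perm_inj.
  lia.
have [g [ginj gT]] := inj_card (leq_trans cS cT).
pose A := [set y : 'I_N | y < b] :|: S.
pose f := fun y : 'I_N => if y < b then y else g y.
have inS : forall y, y \in A -> ~~ (y < b) -> y \in S.
  by move=> y; rewrite !inE => /orP[->|->].
have gb : forall y, y \in S -> b <= g y.
  by move=> y /gT; rewrite inE => /andP[].
have finj : {in A &, injective f}.
  move=> x y xA yA; rewrite /f.
  case: ifP => hx; case: ifP => hy //.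
  - by move=> e; have := gb y (inS _ yA (negbT hy)); rewrite -e leqNgt hx.
  - by move=> e; have := gb x (inS _ xA (negbT hx)); rewrite e leqNgt hy.
  - by apply: ginj; apply: inS => //; rewrite ?hx ?hy.
have [tau htau] := ext_perm finj.
exists tau; split.
  by move=> y hy; rewrite htau /f ?hy // !inE hy.
move=> k hk hb.
have s1S : s1 k \in S by rewrite !inE hb permK hk.
have := gT _ s1S; rewrite htau; last by rewrite in_setU s1S orbT.
by rewrite /f ltnNge hb /= !inE -leqNgt => /andP[].
Qed.

End Ext.

Section GTTproof.
Variables (R : realType) (X Y : Type) (dX : X -> X -> R) (dY : Y -> Y -> R)
  (y0 : Y) (p C : R).
Hypotheses (p1 : 1 <= p) (C0 : 0 < C) (hX : pseudometric dX) (hY : pseudometric dY).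

Local Notation pw x := (x `^ p).

Lemma dX0 x : dX x x = 0. Proof. by case: hX => h _ _; exact: h. Qed.
Lemma dXC x y : dX x y = dX y x. Proof. by case: hX => _ h _; exact: h. Qed.
Lemma dXT x y z : dX x z <= dX x y + dX y z. Proof. by case: hX => _ _ h; exact: h. Qed.
Lemma dX_ge0 x y : 0 <= dX x y.
Proof. have := dXT x y x; rewrite dX0 (dXC y x) -mulr2n -mulr_natr pmulr_lge0 //. Qed.
Lemma dY0 x : dY x x = 0. Proof. by case: hY => h _ _; exact: h. Qed.
Lemma dYC x y : dY x y = dY y x. Proof. by case: hY => _ h _; exact: h. Qed.
Lemma dYT x y z : dY x z <= dY x y + dY y z. Proof. by case: hY => _ _ h; exact: h. Qed.
Lemma dY_ge0 x y : 0 <= dY x y.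
Proof. have := dYT x y x; rewrite dY0 (dYC y x) -mulr2n -mulr_natr pmulr_lge0 //. Qed.

Lemma pw0 : pw 0 = 0. Proof. exact: powR0 (p_neq0 p1). Qed.

Definition pvn (G : graph X Y) (k : nat) : option X :=
  omap (gv G) (insub k : option 'I_(gn G)).
Definition pen (G : graph X Y) (k k' : nat) : Y :=
  match (insub k : option 'I_(gn G)), (insub k' : option 'I_(gn G)) with
  | Some i, Some i' => ge G i i'
  | _, _ => y0 end.

Lemma pvn_in G (i : 'I_(gn G)) : pvn G i = Some (gv G i).
Proof. by rewrite /pvn valK. Qed.
Lemma pvn_out G k : (gn G <= k)%N -> pvn G k = None.
Proof. by move=> h; rewrite /pvn insubN // -leqNgt. Qed.
Lemma pen_in G (i i' : 'I_(gn G)) : pen G i i' = ge G i i'.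
Proof. by rewrite /pen !valK. Qed.
Lemma pen_out G k k' : ~~ ((k < gn G)%N && (k' < gn G)%N) -> pen G k k' = y0.
Proof.
rewrite negb_and -!leqNgt => /orP[h|h]; rewrite /pen.
  by rewrite insubN // -leqNgt.
by case: insubP => // *; rewrite insubN // -leqNgt.
Qed.

Definition delta (a b : option X) : R :=
  match a, b with
  | Some x, Some z => dX x z
  | None, None => 0
  | _, _ => C end.

Lemma delta_ge0 a b : 0 <= delta a b.
Proof. by case: a => [x|]; case: b => [z|] //=; rewrite ?dX_ge0 // ltW. Qed.
Lemma deltaC a b : delta a b = delta b a.
Proof. by case: a => [x|]; case: b => [z|] //=; rewrite dXC. Qed.
Lemma delta0 a : delta a a = 0.
Proof. by case: a => [x|] //=; rewrite dX0. Qed.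
Lemma deltaT a b c : ~ [/\ isSome a, b = None & isSome c] ->
  delta a c <= delta a b + delta b c.
Proof.
case: a => [x|]; case: b => [y|]; case: c => [z|] //= H; rewrite ?add0r ?addr0 //.
- exact: dXT.
- by rewrite lerDr dX_ge0.
- by exfalso; apply: H.
- by rewrite lerDl dX_ge0.
- by rewrite addr_ge0 // ltW.
Qed.

Definition PC (G H : graph X Y) (N : nat) (s : 'S_N) : R :=
  \sum_(k < N) pw (delta (pvn G k) (pvn H (s k)))
  + 2^-1 * \sum_(k < N) \sum_(k' < N) pw (dY (pen G k k') (pen H (s k) (s k'))).

Lemma PC_reindex G H N (s u : 'S_N) : PC G H s =
  \sum_(k < N) pw (delta (pvn G (u k)) (pvn H (s (u k))))
  + 2^-1 * \sum_(k < N) \sum_(k' < N)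
      pw (dY (pen G (u k) (u k')) (pen H (s (u k)) (s (u k')))).
Proof.
rewrite /PC (reindex_inj (@perm_inj _ u)); congr (_ + 2^-1 * _).
rewrite (reindex_inj (@perm_inj _ u)); apply: eq_bigr => k _.
by rewrite (reindex_inj (@perm_inj _ u)).
Qed.

Lemma PC_sym G H N (s : 'S_N) : PC G H s = PC H G s^-1.
Proof.
rewrite (PC_reindex _ _ s (s^-1)) /PC; congr (_ + 2^-1 * _).
  by apply: eq_bigr => k _; rewrite permKV deltaC.
apply: eq_bigr => k _; apply: eq_bigr => k' _; by rewrite !permKV dYC.
Qed.

Lemma PC_ge0 G H N (s : 'S_N) : 0 <= PC G H s.
Proof.
apply: addr_ge0; first by apply: sumr_ge0 => k _; exact: powR_ge0.
apply: mulr_ge0; first by rewrite invr_ge0.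
by apply: sumr_ge0 => k _; apply: sumr_ge0 => k' _; exact: powR_ge0.
Qed.


Lemma sum2_cond (I : finType) (P : pred I) (F : I -> I -> R) :
  \sum_(i | P i) \sum_(i' | P i') F i i' =
  \sum_i \sum_i' (if P i && P i' then F i i' else 0).
Proof.
rewrite big_mkcond; apply: eq_bigr => i _; case: (P i) => /=.
  by rewrite big_mkcond.
by rewrite big1.
Qed.

Lemma narrow1 (N m : nat) (h : (m <= N)%N) (F : 'I_N -> R) :
  \sum_(k < N) (if (k < m)%N then F k else 0) = \sum_(i < m) F (widen_ord h i).
Proof. by rewrite -big_mkcond big_ord_narrow. Qed.

Lemma narrow2 (N m : nat) (h : (m <= N)%N) (F : 'I_N -> 'I_N -> R) :
  \sum_(k < N) \sum_(k' < N) (if (k < m)%N && (k' < m)%N then F k k' else 0) =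
  \sum_(i < m) \sum_(i' < m) F (widen_ord h i) (widen_ord h i').
Proof.
rewrite -(sum2_cond (fun k : 'I_N => (k < m)%N)) big_ord_narrow.
by apply: eq_bigr => i _; rewrite big_ord_narrow.
Qed.

Lemma sum_const_ord (n : nat) (c : R) : \sum_(i < n) c = c *+ n.
Proof. by rewrite sumr_const card_ord. Qed.


Lemma sum_constP (I : finType) (P : pred I) (c : R) : \sum_(i | P i) c = c *+ #|P|.
Proof. by rewrite -sumr_const. Qed.

Lemma delta_None_l (H : graph X Y) (j : nat) :
  pw (delta None (pvn H j)) = if (j < gn H)%N then pw C else 0.
Proof.
case: ltnP => h; last by rewrite pvn_out // /= pw0.
by rewrite /pvn insubT.
Qed.

Lemma sum_perm_lt (N n : nat) (hnN : (n <= N)%N) (s : 'S_N) (c : R) :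
  \sum_(k < N) (if (s k < n)%N then c else 0) = c *+ n.
Proof.
rewrite (reindex_inj (@perm_inj _ (s^-1)%g)) /=.
under eq_bigr => k _ do rewrite permKV.
by rewrite (narrow1 hnN (fun _ => c)) sum_const_ord.
Qed.

Lemma compat_PC G H N (hmn : (gn G <= gn H)%N) (hmN : (gn G <= N)%N)
  (hnN : (gn H <= N)%N) (I : {set 'I_(gn G)}) (pi : 'S_(gn H)) (s : 'S_N) :
  (forall i : 'I_(gn G), i \in I ->
     val (s (widen_ord hmN i)) = val (pi (widen_ord hmn i))) ->
  (forall i : 'I_(gn G), i \notin I -> (gn H <= s (widen_ord hmN i))%N) ->
  PC G H s = gtt_cost dX dY y0 p C hmn I pi.
Proof.
move=> hsI hsO.
have memI : forall j : 'I_(gn H), ((s^-1)%g (widen_ord hnN j) < gn G)%N =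
    (j \in (fun i : 'I_(gn G) => pi (widen_ord hmn i)) @: I).
  move=> j; apply/idP/idP.
  - move=> hk; pose i := Ordinal hk.
    have ew : widen_ord hmN i = (s^-1)%g (widen_ord hnN j) by apply: val_inj.
    case: (boolP (i \in I)) => iI.
      apply/imsetP; exists i => //; apply: val_inj.
      by rewrite -hsI // ew permKV.
    by have := hsO i iI; rewrite ew permKV /= leqNgt ltn_ord.
  - case/imsetP => i iI ->.
    have : s (widen_ord hmN i) = widen_ord hnN (pi (widen_ord hmn i)).
      by apply: val_inj; rewrite /= hsI.
    by move <-; rewrite permK /= ltn_ord.
have hIm : (#|I| <= gn G)%N by rewrite -[X in (_ <= X)%N]card_ord max_card.
have V : \sum_(k < N) pw (delta (pvn G k) (pvn H (s k))) =
   (gn G + gn H - 2 * #|I|)%N%:R * pw C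
   + \sum_(i in I) pw (dX (gv G i) (gv H (pi (widen_ord hmn i)))).
  have e1 : forall k : 'I_N, pw (delta (pvn G k) (pvn H (s k))) =
      (if (k < gn G)%N then pw (delta (pvn G k) (pvn H (s k))) else 0)
    + ((if (s k < gn H)%N then pw C else 0)
       - (if (k < gn G)%N then (if (s k < gn H)%N then pw C else 0) else 0)).
    move=> k; case: ifP => hk; first by rewrite subrr addr0.
    by rewrite pvn_out ?delta_None_l ?add0r ?subr0 // leqNgt hk.
  rewrite (eq_bigr _ (fun k _ => e1 k)) big_split /= sumrB.
  rewrite (sum_perm_lt hnN) (narrow1 hmN) (narrow1 hmN (fun k => if (s k < gn H)%N then pw C else 0)) /=.
  have e2 : \sum_(i < gn G) (if (s (widen_ord hmN i) < gn H)%N then pw C else 0)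
      = pw C *+ #|I|.
    rewrite -sumr_const [RHS]big_mkcond /=; apply: eq_bigr => i _.
    case: (boolP (i \in I)) => iI.
      by rewrite hsI // ltn_ord.
    by rewrite ltnNge hsO.
  rewrite e2 (bigID (fun i => i \in I)) /=.
  have e3 : \sum_(i in I) pw (delta (pvn G i) (pvn H (s (widen_ord hmN i))))
      = \sum_(i in I) pw (dX (gv G i) (gv H (pi (widen_ord hmn i)))).
    by apply: eq_bigr => i iI; rewrite pvn_in hsI // pvn_in.
  have e4 : \sum_(i < gn G | i \notin I) pw (delta (pvn G i) (pvn H (s (widen_ord hmN i))))
      = pw C *+ gn G - pw C *+ #|I|.
    rewrite (eq_bigr (fun _ => pw C)); last first.
      by move=> i iI; rewrite pvn_in pvn_out ?hsO.
    apply/eqP; rewrite eq_sym subr_eq addrC -sumr_const.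
    by rewrite -(sum_const_ord (gn G)) (bigID (fun i => i \in I)) /=.
  rewrite e3 e4 -(mulrnBr _ hIm) -(mulrnBr _ (leq_trans hIm hmn)) -mulr_natl.
  have -> : (gn G + gn H - 2 * #|I|)%N = ((gn G - #|I|) + (gn H - #|I|))%N.
    have := leq_trans hIm hmn; lia.
  rewrite natrD mulrDl !mulr_natl; ring.
have E : \sum_(k < N) \sum_(k' < N) pw (dY (pen G k k') (pen H (s k) (s k'))) =
   \sum_(i in I) \sum_(i' in I)
      pw (dY (ge G i i') (ge H (pi (widen_ord hmn i)) (pi (widen_ord hmn i'))))
 + \sum_(i : 'I_(gn G)) \sum_(i' : 'I_(gn G) | ~~ ((i \in I) && (i' \in I)))
      pw (dY (ge G i i') y0)
 + \sum_(j : 'I_(gn H)) \sum_(j' : 'I_(gn H) |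
      ~~ ((j \in (fun i : 'I_(gn G) => pi (widen_ord hmn i)) @: I) &&
          (j' \in (fun i : 'I_(gn G) => pi (widen_ord hmn i)) @: I)))
      pw (dY y0 (ge H j j')).
  have e2 : forall k k' : 'I_N, pw (dY (pen G k k') (pen H (s k) (s k'))) =
     (if (k < gn G)%N && (k' < gn G)%N then pw (dY (pen G k k') (pen H (s k) (s k'))) else 0)
   + (if (k < gn G)%N && (k' < gn G)%N then 0 else pw (dY y0 (pen H (s k) (s k')))).
    move=> k k'; case: ifP => h; first by rewrite addr0.
    by rewrite add0r pen_out // h.
  rewrite (_ : \sum_(k < N) _ = 
     \sum_(k < N) \sum_(k' < N) (if (k < gn G)%N && (k' < gn G)%N then pw (dY (pen G k k') (pen H (s k) (s k'))) else 0)
   + \sum_(k < N) \sum_(k' < N) (if (k < gn G)%N && (k' < gn G)%N then 0 else pw (dY y0 (pen H (s k) (s k'))))); last first.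
    rewrite -big_split; apply: eq_bigr => k _; rewrite -big_split; apply: eq_bigr => k' _.
    exact: e2.
  rewrite (narrow2 hmN) /=; congr (_ + _).
    have e3 : forall i i' : 'I_(gn G),
      pw (dY (pen G i i') (pen H (s (widen_ord hmN i)) (s (widen_ord hmN i')))) =
      (if (i \in I) && (i' \in I) then
         pw (dY (ge G i i') (ge H (pi (widen_ord hmn i)) (pi (widen_ord hmn i')))) else 0)
    + (if (i \in I) && (i' \in I) then 0 else pw (dY (ge G i i') y0)).
      move=> i i'; rewrite pen_in.
      case: (boolP (i \in I)) => iI; case: (boolP (i' \in I)) => i'I /=;
        rewrite ?addr0 ?add0r.
      - by rewrite hsI // hsI // pen_in.
      - by rewrite pen_out // negb_and -!leqNgt (hsO _ i'I) orbT.
      - by rewrite pen_out // negb_and -!leqNgt (hsO _ iI).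
      - by rewrite pen_out // negb_and -!leqNgt (hsO _ iI).
    rewrite (_ : \sum_(i < gn G) _ = \sum_(i < gn G) \sum_(i' < gn G)
      ((if (i \in I) && (i' \in I) then
         pw (dY (ge G i i') (ge H (pi (widen_ord hmn i)) (pi (widen_ord hmn i')))) else 0)
    + (if (i \in I) && (i' \in I) then 0 else pw (dY (ge G i i') y0)))); last first.
      by apply: eq_bigr => i _; apply: eq_bigr => i' _; rewrite -e3.
    rewrite (_ : \sum_(i < gn G) _ = \sum_(i < gn G) \sum_(i' < gn G)
      (if (i \in I) && (i' \in I) then
         pw (dY (ge G i i') (ge H (pi (widen_ord hmn i)) (pi (widen_ord hmn i')))) else 0)
     + \sum_(i < gn G) \sum_(i' < gn G)
      (if (i \in I) && (i' \in I) then 0 else pw (dY (ge G i i') y0))); last first.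
      by rewrite -big_split; apply: eq_bigr => i _; rewrite -big_split.
    congr (_ + _); first by rewrite (sum2_cond (fun i => i \in I)).
    apply: eq_bigr => i _; rewrite [RHS]big_mkcond; apply: eq_bigr => i' _.
    by rewrite if_neg.
  rewrite (_ : \sum_(k < N) _ = \sum_(j < N) \sum_(j' < N)
     (if ((s^-1)%g j < gn G)%N && ((s^-1)%g j' < gn G)%N then 0
      else pw (dY y0 (pen H j j')))); last first.
    rewrite (reindex_inj (@perm_inj _ (s^-1)%g)); apply: eq_bigr => k _.
    rewrite (reindex_inj (@perm_inj _ (s^-1)%g)); apply: eq_bigr => k' _.
    by rewrite !permKV.
  rewrite (_ : \sum_(j < N) _ = \sum_(j < N) \sum_(j' < N)
     (if (j < gn H)%N && (j' < gn H)%N then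
     (if ((s^-1)%g j < gn G)%N && ((s^-1)%g j' < gn G)%N then 0
      else pw (dY y0 (pen H j j'))) else 0)); last first.
    apply: eq_bigr => j _; apply: eq_bigr => j' _.
    case h: ((j < gn H)%N && (j' < gn H)%N); first by [].
    rewrite pen_out ?h // dY0 pw0; by case: ifP.
  rewrite (narrow2 hnN); apply: eq_bigr => j _; rewrite [RHS]big_mkcond.
  apply: eq_bigr => j' _; by rewrite /= pen_in !memI if_neg.
rewrite /PC V E /gtt_cost /=.
by rewrite !mulrDr !addrA.
Qed.


Lemma dist_le G H (h : (gn G <= gn H)%N) :
  gtt_dist dX dY y0 p C G H = gtt_le dX dY y0 p C h.
Proof.
rewrite /gtt_dist.
move: (erefl (gn G <= gn H)%N).
case: {2 3}(gn G <= gn H)%N => e.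
  by rewrite (bool_irrelevance e h).
by exfalso; rewrite h in e.
Qed.

Lemma dist_gt G H (h : (gn H <= gn G)%N) (h' : (gn G <= gn H)%N = false) :
  gtt_dist dX dY y0 p C G H = gtt_le dX dY y0 p C h.
Proof.
rewrite /gtt_dist.
move: (erefl (gn G <= gn H)%N).
case: {2 3}(gn G <= gn H)%N => e.
  by exfalso; rewrite h' in e.
by rewrite (bool_irrelevance (nleq_geq e) h).
Qed.

Lemma bigmin_le_seq (T : eqType) (r : seq T) (F : T -> R) x0 i : i \in r ->
  \big[Num.min/x0]_(j <- r) F j <= F i.
Proof.
elim: r => // a r IH; rewrite inE big_cons => /orP[/eqP->|ir].
  by rewrite ge_min lexx.
by rewrite ge_min (IH ir) orbT.
Qed.

Lemma bigmin_att_seq (T : eqType) (r : seq T) (F : T -> R) x0 :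
  \big[Num.min/x0]_(j <- r) F j = x0 \/ exists i, \big[Num.min/x0]_(j <- r) F j = F i.
Proof.
elim: r => [|a r IH]; first by left; rewrite big_nil.
rewrite big_cons minEle; case: ifP => _; first by right; exists a.
exact: IH.
Qed.

Definition Vle G H (h : (gn G <= gn H)%N) : R :=
  \big[Num.min/gtt_cost dX dY y0 p C h set0 1%g]_(I : {set 'I_(gn G)})
     \big[Num.min/gtt_cost dX dY y0 p C h set0 1%g]_(pi : 'S_(gn H))
        gtt_cost dX dY y0 p C h I pi.

Lemma gtt_leE G H (h : (gn G <= gn H)%N) : gtt_le dX dY y0 p C h = Vle h `^ p^-1.
Proof. by []. Qed.

Lemma Vle_le G H (h : (gn G <= gn H)%N) I pi : Vle h <= gtt_cost dX dY y0 p C h I pi.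
Proof.
apply: le_trans (bigmin_le_seq _ _ (mem_index_enum I)) _.
exact: bigmin_le_seq (mem_index_enum pi).
Qed.

Lemma Vle_att G H (h : (gn G <= gn H)%N) :
  exists I pi, Vle h = gtt_cost dX dY y0 p C h I pi.
Proof.
rewrite /Vle.
set c0 := gtt_cost _ _ _ _ _ h set0 1%g.
case: (bigmin_att_seq (index_enum {set 'I_(gn G)}) (fun I : {set 'I_(gn G)} =>
  \big[Num.min/c0]_(pi : 'S_(gn H)) gtt_cost dX dY y0 p C h I pi) c0) => [->|[I ->]].
  by exists set0, 1%g.
case: (bigmin_att_seq (index_enum 'S_(gn H)) (fun pi => gtt_cost dX dY y0 p C h I pi) c0)
  => [->|[pi ->]]; first by exists set0, 1%g.
by exists I, pi.
Qed.


Lemma K1 G H (h : (gn G <= gn H)%N) N (hN : (gn G + gn H <= N)%N) (s : 'S_N) :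
  Vle h <= PC G H s.
Proof.
have hmN : (gn G <= N)%N := leq_trans (leq_addr _ _) hN.
have hnN : (gn H <= N)%N := leq_trans (leq_addl _ _) hN.
pose I := [set i : 'I_(gn G) | (s (widen_ord hmN i) < gn H)%N].
pose A := [set j : 'I_(gn H) | (j < gn G)%N && (s (widen_ord hnN j) < gn H)%N].
pose f := fun j : 'I_(gn H) => insubd j (val (s (widen_ord hnN j))) : 'I_(gn H).
have fv : forall j, j \in A -> val (f j) = s (widen_ord hnN j).
  by move=> j; rewrite inE => /andP[_ hj]; rewrite val_insubd hj.
have finj : {in A &, injective f}.
  move=> x y xA yA e; have := congr1 val e; rewrite !fv // => /val_inj /perm_inj.
  by move/(congr1 val) => /= ev; apply: val_inj.
have [pi hpi] := ext_perm finj.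
have ww : forall i : 'I_(gn G), widen_ord hnN (widen_ord h i) = widen_ord hmN i.
  by move=> i; apply: val_inj.
rewrite (@compat_PC G H N h hmN hnN I pi s); first exact: Vle_le.
  move=> i; rewrite inE => hi.
  have wA : widen_ord h i \in A by rewrite inE /= ltn_ord ww.
  by rewrite hpi // fv // ww.
by move=> i; rewrite inE -leqNgt.
Qed.


Lemma K2 G H (h : (gn G <= gn H)%N) N (hN : (gn G + gn H <= N)%N) :
  exists s : 'S_N, PC G H s = Vle h.
Proof.
have hmN : (gn G <= N)%N := leq_trans (leq_addr _ _) hN.
have hnN : (gn H <= N)%N := leq_trans (leq_addl _ _) hN.
have [I [pi ->]] := Vle_att h.
pose F := fun k : nat => if (insub k : option 'I_(gn G)) is Some i then
  (if i \in I then val (pi (widen_ord h i)) else (gn H + k)%N) else k.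
pose A := [set k : 'I_N | (k < gn G)%N].
have FN : forall k : 'I_N, k \in A -> (F k < N)%N.
  move=> k; rewrite inE => hk; rewrite /F insubT /=; case: ifP => _.
    exact: leq_trans (ltn_ord _) hnN.
  by apply: leq_trans hN; rewrite addnC ltn_add2r.
pose f := fun k : 'I_N => insubd k (F k) : 'I_N.
have fv : forall k, k \in A -> val (f k) = F k.
  by move=> k kA; rewrite val_insubd FN.
have finj : {in A &, injective f}.
  move=> x y xA yA e; have := congr1 val e; rewrite !fv //.
  move: xA yA; rewrite !inE => hx hy.
  rewrite /F; case: insubP => [ix _ ex|]; last by rewrite hx.
  case: insubP => [iy _ ey|]; last by rewrite hy.
  case: (boolP (ix \in I)) => ixI; case: (boolP (iy \in I)) => iyI.
  - move/val_inj/perm_inj/(congr1 val) => /= e2; apply: val_inj.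
    by rewrite /= -ex -ey; exact: e2.
  - by move=> e2; have := ltn_ord (pi (widen_ord h ix)); rewrite e2 ltnNge leq_addr.
  - by move=> e2; have := ltn_ord (pi (widen_ord h iy)); rewrite -e2 ltnNge leq_addr.
  - by move/addnI => e2; apply: val_inj.
have [s hs] := ext_perm finj.
exists s.
have kA : forall i : 'I_(gn G), widen_ord hmN i \in A by move=> i; rewrite inE /= ltn_ord.
apply: (@compat_PC G H N h hmN hnN I pi s).
  move=> i iI; rewrite hs // fv // /F /= valK iI //.
move=> i iI; rewrite hs // fv // /F /= valK (negbTE iI).
exact: leq_addr.
Qed.


Local Notation d := (gtt_dist dX dY y0 p C).

Lemma Vle_ge0 G H (h : (gn G <= gn H)%N) : 0 <= Vle h.
Proof.
have [s <-] := @K2 G H h (gn G + gn H) (leqnn _); exact: PC_ge0.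
Qed.

Lemma le_pw G H (h : (gn G <= gn H)%N) : (gtt_le dX dY y0 p C h) `^ p = Vle h.
Proof. by rewrite gtt_leE pw_pinv // Vle_ge0. Qed.

Lemma dist_ge0 G H : 0 <= d G H.
Proof.
case: (leqP (gn G) (gn H)) => h; first by rewrite (dist_le h) gtt_leE powR_ge0.
have h' : (gn G <= gn H)%N = false by rewrite leqNgt h.
by rewrite (dist_gt (ltnW h) h') gtt_leE powR_ge0.
Qed.

Lemma GK1 G H N (hN : (gn G + gn H <= N)%N) (s : 'S_N) : d G H `^ p <= PC G H s.
Proof.
case: (leqP (gn G) (gn H)) => h; first by rewrite (dist_le h) le_pw; exact: K1.
have h' : (gn G <= gn H)%N = false by rewrite leqNgt h.
rewrite (dist_gt (ltnW h) h') le_pw PC_sym; apply: K1; by rewrite addnC.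
Qed.

Lemma GK2 G H N (hN : (gn G + gn H <= N)%N) : exists s : 'S_N, PC G H s = d G H `^ p.
Proof.
case: (leqP (gn G) (gn H)) => h.
  by rewrite (dist_le h) le_pw; exact: K2.
have h' : (gn G <= gn H)%N = false by rewrite leqNgt h.
rewrite (dist_gt (ltnW h) h') le_pw.
have hN' : (gn H + gn G <= N)%N by rewrite addnC.
have [s' hs'] := @K2 H G (ltnW h) N hN'.
by exists (s'^-1)%g; rewrite PC_sym invgK.
Qed.

Lemma dist_sym G H : d G H = d H G.
Proof.
have key : forall G H, d G H `^ p <= d H G `^ p.
  move=> G0 H0.
  have hN' : (gn H0 + gn G0 <= gn G0 + gn H0)%N by rewrite addnC.
  have [s hs] := @GK2 H0 G0 (gn G0 + gn H0) hN'.
  rewrite -hs PC_sym; exact: GK1.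
rewrite -(pinv_pw p1 (dist_ge0 G H)) -(pinv_pw p1 (dist_ge0 H G)).
by congr (_ `^ _); apply/eqP; rewrite eq_le !key.
Qed.


Lemma cost_setT G H (h : (gn G <= gn H)%N) (e : gn G = gn H) (pi : 'S_(gn H)) :
  (forall i i' : 'I_(gn G), gv G i = gv H (pi (cast_ord e i)) /\
      ge G i i' = ge H (pi (cast_ord e i)) (pi (cast_ord e i'))) ->
  gtt_cost dX dY y0 p C h setT pi = 0.
Proof.
move=> hg.
have ce : forall i : 'I_(gn G), widen_ord h i = cast_ord e i by move=> i; apply: val_inj.
rewrite /gtt_cost /= cardsT card_ord.
have -> : (gn G + gn H - 2 * gn G)%N = 0%N by rewrite -e; lia.
rewrite mul0r add0r.
rewrite big1; last by move=> i _; rewrite ce (proj1 (hg i i)) dX0 pw0.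
rewrite big1; last first.
  by move=> i _; rewrite big1 // => i' _; rewrite !ce (proj2 (hg i i')) dY0 pw0.
rewrite big1; last first.
  by move=> i _; rewrite big_pred0 // => i'; rewrite !in_setT.
have allin : forall j : 'I_(gn H), j \in (fun i : 'I_(gn G) => pi (widen_ord h i)) @: setT.
  move=> j; apply/imsetP; exists (cast_ord (esym e) ((pi^-1)%g j)); first by rewrite in_setT.
  rewrite ce; rewrite (_ : cast_ord e (cast_ord (esym e) _) = (pi^-1)%g j) ?permKV //.
  by apply: val_inj.
rewrite big1; last first.
  by move=> j _; rewrite big_pred0 // => j'; rewrite !allin.
by rewrite !mulr0 !addr0.
Qed.

Lemma dist_eq0 G H : graph_eq G H -> d G H = 0.
Proof.
case=> e [pi hg].
have h : (gn G <= gn H)%N by rewrite e.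
rewrite (dist_le h) gtt_leE.
have : Vle h <= 0 by rewrite -(cost_setT h hg); exact: Vle_le.
move=> hle; have -> : Vle h = 0 by apply/eqP; rewrite eq_le hle Vle_ge0.
by rewrite powR0 // invr_eq0 (p_neq0 p1).
Qed.


Lemma cost0 G H (h : (gn G <= gn H)%N) I pi :
  gtt_cost dX dY y0 p C h I pi = 0 ->
  [/\ (gn G + gn H - 2 * #|I|)%N = 0%N,
      (forall i, i \in I -> dX (gv G i) (gv H (pi (widen_ord h i))) = 0) &
      (forall i i', i \in I -> i' \in I ->
        dY (ge G i i') (ge H (pi (widen_ord h i)) (pi (widen_ord h i'))) = 0)].
Proof.
rewrite /gtt_cost /=.
set t1 := _%:R * _; set t2 := \sum_(i in I) _; set t3 := \sum_(i in I) _.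
set t4 := \sum_(i < gn G) _; set t5 := \sum_(j < gn H) _.
have pC : 0 < C `^ p by exact: powR_gt0.
have n1 : 0 <= t1 by rewrite /t1 mulr_ge0 // ltW.
have n2 : 0 <= t2 by apply: sumr_ge0 => i _; exact: powR_ge0.
have n3 : 0 <= t3 by apply: sumr_ge0 => i _; apply: sumr_ge0 => i' _; exact: powR_ge0.
have n4 : 0 <= t4 by apply: sumr_ge0 => i _; apply: sumr_ge0 => i' _; exact: powR_ge0.
have n5 : 0 <= t5 by apply: sumr_ge0 => i _; apply: sumr_ge0 => i' _; exact: powR_ge0.
move=> e.
have z1 : t1 = 0 by lra.
have z2 : t2 = 0 by lra.
have z3 : t3 = 0 by lra.
split.
- move: z1; rewrite /t1 => /eqP; rewrite mulf_eq0 (gt_eqF pC) orbF pnatr_eq0.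
  by move/eqP.
- move=> i iI.
  have := @psumr_eq0P R _ (fun i => i \in I) _ (fun i _ => powR_ge0 _ _) z2 i iI.
  exact: powR_eq0_eq0.
- move=> i i' iI i'I.
  have := @psumr_eq0P R _ (fun i => i \in I) _ (fun i _ => sumr_ge0 _ (fun i' _ => powR_ge0 _ _)) z3 i iI.
  move=> z.
  have := @psumr_eq0P R _ (fun i => i \in I) _ (fun i _ => powR_ge0 _ _) z i' i'I.
  exact: powR_eq0_eq0.
Qed.


Lemma dist0_eq (hXm : forall x y, dX x y = 0 -> x = y)
  (hYm : forall x y, dY x y = 0 -> x = y) G H : d G H = 0 -> graph_eq G H.
Proof.
move=> d0.
case: (leqP (gn G) (gn H)) => h; last first.
  have h' : (gn G <= gn H)%N = false by rewrite leqNgt h.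
  move: d0; rewrite (dist_gt (ltnW h) h') gtt_leE => /powR_eq0_eq0.
  have [I [pi ->]] := Vle_att (ltnW h).
  case/cost0 => e _ _.
  have : (#|I| <= gn H)%N by rewrite -[X in (_ <= X)%N]card_ord max_card.
  lia.
move: d0; rewrite (dist_le h) gtt_leE => /powR_eq0_eq0.
have [I [pi ->]] := Vle_att h.
case/cost0 => e hv he.
have hIm : (#|I| <= gn G)%N by rewrite -[X in (_ <= X)%N]card_ord max_card.
have emn : gn G = gn H by lia.
have IT : forall i, i \in I.
  have : I == setT by rewrite eqEcard subsetT cardsT card_ord; lia.
  by move/eqP => -> i; rewrite in_setT.
exists emn, pi => i i'.
have ce : forall i : 'I_(gn G), cast_ord emn i = widen_ord h i by move=> j; apply: val_inj.
rewrite !ce; split; [apply: hXm; exact: hv | apply: hYm; exact: he].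
Qed.


Lemma fix_prop N b (u : 'S_N) : (forall y : 'I_N, (y < b)%N -> u y = y) ->
  forall k : 'I_N, (u k < b)%N = (k < b)%N.
Proof.
move=> hu k; case: (ltnP k b) => hk; first by rewrite hu.
apply/negbTE/negP => h.
have := hu _ h => /perm_inj e.
by move: hk; rewrite -e leqNgt h.
Qed.

Lemma fix_inv N b (u : 'S_N) : (forall y : 'I_N, (y < b)%N -> u y = y) ->
  forall y : 'I_N, (y < b)%N -> (u^-1)%g y = y.
Proof. by move=> hu y hy; rewrite -{1}(hu _ hy) permK. Qed.

Lemma pvn_fix G N (u : 'S_N) : (forall y : 'I_N, (y < gn G)%N -> u y = y) ->
  forall k : 'I_N, pvn G (u k) = pvn G k.
Proof.
move=> hu k; case: (ltnP k (gn G)) => hk; first by rewrite hu.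
by rewrite !pvn_out // leqNgt (fix_prop hu) -leqNgt.
Qed.

Lemma pen_fix G N (u : 'S_N) : (forall y : 'I_N, (y < gn G)%N -> u y = y) ->
  forall k k' : 'I_N, pen G (u k) (u k') = pen G k k'.
Proof.
move=> hu k k'.
case h: ((k < gn G)%N && (k' < gn G)%N).
  by case/andP: h => hk hk'; rewrite !hu.
by rewrite !pen_out ?h // !(fix_prop hu) h.
Qed.

Lemma PC_tau G H N (tau s : 'S_N) : (forall y : 'I_N, (y < gn G)%N -> tau y = y) ->
  PC G H (tau * s)%g = PC G H s.
Proof.
move=> ht; have hi := fix_inv ht.
rewrite (PC_reindex _ _ _ (tau^-1)%g) /PC; congr (_ + 2^-1 * _).
  by apply: eq_bigr => k _; rewrite permM permKV (pvn_fix hi).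
apply: eq_bigr => k _; apply: eq_bigr => k' _.
by rewrite !permM !permKV (pen_fix hi).
Qed.


Definition wJ N (j : ('I_N + ('I_N * 'I_N))%type) : R :=
  match j with inl _ => 1 | inr _ => 2^-1 end.
Definition compJ N (F : 'I_N -> R) (FF : 'I_N -> 'I_N -> R)
  (j : ('I_N + ('I_N * 'I_N))%type) : R :=
  match j with inl k => F k | inr kk => FF kk.1 kk.2 end.

Lemma PCJ N (F : 'I_N -> R) (FF : 'I_N -> 'I_N -> R) :
  \sum_(k < N) pw (F k) + 2^-1 * \sum_(k < N) \sum_(k' < N) pw (FF k k') =
  \sum_(j : ('I_N + ('I_N * 'I_N))%type) wJ j * pw (compJ F FF j).
Proof.
rewrite big_sumType /=; congr (_ + _).
  by apply: eq_bigr => k _; rewrite mul1r.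
by rewrite pair_big mulr_sumr.
Qed.

Lemma pvn_some G k : isSome (pvn G k) = (k < gn G)%N.
Proof.
case: ltnP => h; first by rewrite /pvn insubT.
by rewrite pvn_out.
Qed.

Lemma dist_tri G1 G2 G3 : d G1 G3 <= d G1 G2 + d G2 G3.
Proof.
pose N := (gn G1 + gn G2 + gn G3)%N.
have h12 : (gn G1 + gn G2 <= N)%N by rewrite /N leq_addr.
have h23 : (gn G2 + gn G3 <= N)%N by rewrite /N -addnA leq_addl.
have h13 : (gn G1 + gn G3 <= N)%N by rewrite /N addnAC leq_addr.
have [s1 hs1] := GK2 h12.
have [s2 hs2] := GK2 h23.
have [tau [ht1 ht2]] := @tau_exists N (gn G1) (gn G2) (gn G3) (leqnn N) s1 s2.
pose s2' := (tau * s2)%g.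
have hs2' : PC G2 G3 s2' = d G2 G3 `^ p by rewrite PC_tau.
have hb := GK1 h13 (s1 * s2')%g.
have e13 : PC G1 G3 (s1 * s2')%g = \sum_(j : ('I_N + ('I_N * 'I_N))%type) wJ j *
   pw (compJ (fun k => delta (pvn G1 k) (pvn G3 (s2' (s1 k))))
        (fun k k' => dY (pen G1 k k') (pen G3 (s2' (s1 k)) (s2' (s1 k')))) j).
  by rewrite /PC -PCJ; congr (_ + 2^-1 * _);
    [apply: eq_bigr => k _ | apply: eq_bigr => k _; apply: eq_bigr => k' _];
    rewrite ?permM.
have e12 : PC G1 G2 s1 = \sum_(j : ('I_N + ('I_N * 'I_N))%type) wJ j *
   pw (compJ (fun k => delta (pvn G1 k) (pvn G2 (s1 k)))
        (fun k k' => dY (pen G1 k k') (pen G2 (s1 k) (s1 k'))) j).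
  by rewrite /PC -PCJ.
have e23 : PC G2 G3 s2' = \sum_(j : ('I_N + ('I_N * 'I_N))%type) wJ j *
   pw (compJ (fun k => delta (pvn G2 (s1 k)) (pvn G3 (s2' (s1 k))))
        (fun k k' => dY (pen G2 (s1 k) (s1 k')) (pen G3 (s2' (s1 k)) (s2' (s1 k')))) j).
  by rewrite (PC_reindex _ _ _ s1) -PCJ.
have hw : forall j, 0 < @wJ N j.
  by case=> [k|kk] /=; rewrite ?ltr01 ?invr_gt0 ?ltr0n.
have hm := minkJ p1 (w := @wJ N)
  (a := compJ (fun k => delta (pvn G1 k) (pvn G2 (s1 k)))
        (fun k k' => dY (pen G1 k k') (pen G2 (s1 k) (s1 k'))))
  (b := compJ (fun k => delta (pvn G2 (s1 k)) (pvn G3 (s2' (s1 k))))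
        (fun k k' => dY (pen G2 (s1 k) (s1 k')) (pen G3 (s2' (s1 k)) (s2' (s1 k')))))
  (c := compJ (fun k => delta (pvn G1 k) (pvn G3 (s2' (s1 k))))
        (fun k k' => dY (pen G1 k k') (pen G3 (s2' (s1 k)) (s2' (s1 k'))))) hw.
have ha0 : forall j, 0 <= compJ (fun k => delta (pvn G1 k) (pvn G2 (s1 k)))
        (fun k k' => dY (pen G1 k k') (pen G2 (s1 k) (s1 k'))) j.
  by case=> [k|kk] /=; rewrite ?delta_ge0 ?dY_ge0.
have hb0 : forall j, 0 <= compJ (fun k => delta (pvn G2 (s1 k)) (pvn G3 (s2' (s1 k))))
        (fun k k' => dY (pen G2 (s1 k) (s1 k')) (pen G3 (s2' (s1 k)) (s2' (s1 k'))))  j.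
  by case=> [k|kk] /=; rewrite ?delta_ge0 ?dY_ge0.
have hc0 : forall j, 0 <= compJ (fun k => delta (pvn G1 k) (pvn G3 (s2' (s1 k))))
        (fun k k' => dY (pen G1 k k') (pen G3 (s2' (s1 k)) (s2' (s1 k')))) j.
  by case=> [k|kk] /=; rewrite ?delta_ge0 ?dY_ge0.
have hcab : forall j, compJ (fun k => delta (pvn G1 k) (pvn G3 (s2' (s1 k))))
        (fun k k' => dY (pen G1 k k') (pen G3 (s2' (s1 k)) (s2' (s1 k')))) j <=
      compJ (fun k => delta (pvn G1 k) (pvn G2 (s1 k)))
        (fun k k' => dY (pen G1 k k') (pen G2 (s1 k) (s1 k'))) j +
      compJ (fun k => delta (pvn G2 (s1 k)) (pvn G3 (s2' (s1 k))))
        (fun k k' => dY (pen G2 (s1 k) (s1 k')) (pen G3 (s2' (s1 k)) (s2' (s1 k')))) j.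
  case=> [k|kk] /=; last exact: dYT.
  apply: deltaT => -[h1 h2 h3].
  rewrite pvn_some in h1; rewrite pvn_some in h3.
  have hb2 : (gn G2 <= s1 k)%N.
    case: (ltnP (s1 k) (gn G2)) => // hlt.
    by move: h2; rewrite -pvn_some in hlt; case: (pvn G2 (s1 k)) hlt.
  have := ht2 k h1 hb2; rewrite /s2' permM in h3.
  by rewrite leqNgt h3.
have h := hm ha0 hb0 hc0 hcab.
rewrite -e12 -e23 -e13 hs1 hs2' !(pinv_pw p1 (dist_ge0 _ _)) in h.
have h' := le_trans hb h.
rewrite -(pinv_pw p1 (dist_ge0 G1 G3)) -(pinv_pw p1 (addr_ge0 (dist_ge0 G1 G2) (dist_ge0 G2 G3))).
apply: ge0_ler_powR => //.
- by rewrite invr_ge0 ltW // (p_gt0 p1).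
- by rewrite nnegrE powR_ge0.
- by rewrite nnegrE powR_ge0.
Qed.


Lemma graph_eq_refl (G : graph X Y) : graph_eq G G.
Proof.
exists erefl, 1%g => i i'; by rewrite !perm1 !cast_ord_id.
Qed.

Lemma main_sec :
  let SG := simple_graph y0 in
  (forall G G' H H', SG G -> SG G' -> SG H -> SG H' ->
     graph_eq G G' -> graph_eq H H' -> d G H = d G' H') /\
  pseudometric_on SG d /\
  (metric dX -> metric dY ->
     forall G H, SG G -> SG H -> d G H = 0 -> graph_eq G H).
Proof.
move=> SG; split; [|split].
- move=> G G' H H' _ _ _ _ eG eH.
  have z1 := dist_eq0 eG; have z2 := dist_eq0 eH.
  apply/eqP; rewrite eq_le; apply/andP; split.
    apply: (le_trans (dist_tri G G' H)); rewrite z1 add0r.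
    by apply: (le_trans (dist_tri G' H' H)); rewrite (dist_sym H' H) z2 addr0.
  apply: (le_trans (dist_tri G' G H')); rewrite (dist_sym G' G) z1 add0r.
  by apply: (le_trans (dist_tri G H H')); rewrite z2 addr0.
- split.
  + by move=> G _; apply: dist_eq0; exact: graph_eq_refl.
  + by move=> G H _ _; exact: dist_sym.
  + by move=> G H K _ _ _; exact: dist_tri.
- by move=> [_ mX] [_ mY] G H _ _; exact: dist0_eq.
Qed.

End GTTproof.


Unset Implicit Arguments.

Theorem mainTheorem2 (R : realType) (X Y : Type)
  (dX : X -> X -> R) (dY : Y -> Y -> R) (y0 : Y) (p C : R) :
  1 <= p -> 0 < C -> pseudometric dX -> pseudometric dY ->
  let d := gtt_dist dX dY y0 p C in
  let SG := simple_graph y0 in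
  (* well defined on equality classes *)
  (forall G G' H H', SG G -> SG G' -> SG H -> SG H' ->
     graph_eq G G' -> graph_eq H H' -> d G H = d G' H') /\
  (* pseudometric on G *)
  pseudometric_on SG d /\
  (* metric case: d(G,H) = 0 forces G = H in G *)
  (metric dX -> metric dY ->
     forall G H, SG G -> SG H -> d G H = 0 -> graph_eq G H).
Proof.
move=> p1 C0 hX hY.
exact: (@main_sec R X Y dX dY y0 p C p1 C0 hX hY).
Qed.
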